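(* Let $h(x)$ be a $\Sigma_{ms}$-term whose only variable (if any) is $x$, interpreted as a function on the rationals in $Q_0(\mathbf s)$. Then there exist a rational number $r$ and a $\Sigma_m$-term $g(x)$ (no sign symbol) whose only variable is $x$, such that for every rational $q>r$, $h(q)=g(q)$ (evaluated in $Q_0(\mathbf s)$ and $Q_0$ respectively).
   Context: $\Sigma_m=(0,1,+,\cdot,-,{}^{-1})$ and $\Sigma_{ms}=\Sigma_m$ extended with a unary symbol $\mathbf s$. $Q_0$ is the field of rational numbers with its usual $0,1,+,\cdot,-$ and the total inverse $q^{-1}=1/q$ for $q\neq0$, $0^{-1}=0$. $Q_0(\mathbf s)$ is $Q_0$ expanded with the sign function $\mathbf s(q)=-1$ if $q<0$, $0$ if $q=0$, $1$ if $q>0$. *)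

(* Defs.v *)
From HB Require Import structures.
From mathcomp Require Import all_boot all_order all_algebra.
Set Implicit Arguments. Unset Strict Implicit. Unset Printing Implicit Defensive.
Import Order.TTheory GRing.Theory Num.Theory.
Local Open Scope ring_scope.

(* Terms over the signature Sigma_ms = (0,1,+,*,-,^-1,s) in the single
   variable x.  Terms of Sigma_m are those not containing [TSgn]. *)
Inductive term : Type :=
  | TVar : term
  | TZero : term
  | TOne : term
  | TAdd : term -> term -> term
  | TMul : term -> term -> term
  | TOpp : term -> term
  | TInv : term -> term
  | TSgn : term -> term.

Definition sgnq (q : rat) : rat := if q < 0 then -1 else if q == 0 then 0 else 1.

(* Evaluation in Q_0(s) at x := q.  The inverse is mathcomp's rat inverse,
   which is total with 0^-1 = 0 (see lemma [invq0_check]). *)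
Fixpoint eval (t : term) (q : rat) : rat :=
  match t with
  | TVar => q
  | TZero => 0
  | TOne => 1
  | TAdd a b => eval a q + eval b q
  | TMul a b => eval a q * eval b q
  | TOpp a => - eval a q
  | TInv a => (eval a q)^-1
  | TSgn a => sgnq (eval a q)
  end.

Fixpoint sign_free (t : term) : bool :=
  match t with
  | TVar | TZero | TOne => true
  | TAdd a b | TMul a b => sign_free a && sign_free b
  | TOpp a | TInv a => sign_free a
  | TSgn _ => false
  end.

Lemma invq0_check : (0 : rat)^-1 = 0.
Proof. exact: invr0. Qed.

(* Main.v *)
Require Import Defs.
From mathcomp Require Import all_boot all_order all_algebra.
Import Order.TTheory GRing.Theory Num.Theory.
Local Open Scope ring_scope.

Lemma mx (r1 r2 q : rat) : Num.max r1 r2 < q -> r1 < q /\ r2 < q.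
Proof. by rewrite gt_max => /andP. Qed.

Lemma poly_pos (p : {poly rat}) : p != 0 ->
  exists r : rat, forall q : rat, r < q ->
    lead_coef p ^+ 2 / 2%:R <= lead_coef p * p.[q].
Proof.
elim/poly_ind: p => [|p c IH]; first by rewrite eqxx.
have [->|pn0] := eqVneq p 0.
  rewrite mul0r add0r polyC_eq0 => cn0.
  exists 0 => q _; rewrite lead_coefC hornerC -expr2.
  rewrite ler_pdivrMr ?ltr0n // ler_peMr ?exprn_gt0 ?ler1n //.
  by rewrite sqr_ge0.
move=> _; have [r Hr] := IH pn0.
set l := lead_coef p.
have ln0 : l != 0 by rewrite lead_coef_eq0.
have lead : lead_coef (p * 'X + c%:P) = l.
  rewrite lead_coefDl ?lead_coefMX // size_polyC size_mulX //.
  case: (c != 0) => //; rewrite ltnS lt0n size_poly_eq0 //.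
rewrite lead.
set L := l ^+ 2 / 2%:R.
have L0 : 0 < L by rewrite divr_gt0 ?ltr0n // lt_def sqrf_eq0 ln0 sqr_ge0.
set t := l * c / L.
have lct : l * c = L * t by rewrite /t [L * _]mulrC divfK // gt_eqF.
exists (Num.max r (1 + `|t|)) => q /mx [rq Hq].
have := Hr q rq; rewrite -/l -/L => Hx.
rewrite hornerD hornerMX hornerC mulrDr mulrA lct.
have q0 : 0 < q by apply: lt_trans Hq; rewrite ltr_wpDr ?normr_ge0.
have h1 : L * q <= l * p.[q] * q by rewrite ler_wpM2r // ltW.
have h2 : 1 - t < q.
  apply: le_lt_trans Hq; rewrite lerD2l; rewrite -normrN; exact: ler_norm.
have h3 : L * (1 - t) < L * q by rewrite ltr_pM2l.
have h4 : L * (1 - t) < l * p.[q] * q by apply: lt_le_trans h1.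
rewrite mulrBr mulr1 ltrBlDr in h4.
exact: ltW.
Qed.

Lemma poly_sg (p : {poly rat}) : p != 0 ->
  exists r : rat, forall q : rat, r < q -> 0 < lead_coef p * p.[q].
Proof.
move=> pn0; have [r Hr] := poly_pos p pn0; exists r => q /Hr; apply: lt_le_trans.
by rewrite divr_gt0 ?ltr0n // lt_def sqrf_eq0 lead_coef_eq0 pn0 sqr_ge0.
Qed.

Lemma poly_nz (p : {poly rat}) : p != 0 ->
  exists r : rat, forall q : rat, r < q -> p.[q] != 0.
Proof.
move=> /poly_sg [r Hr]; exists r => q /Hr; apply: contraTneq => ->.
by rewrite mulr0 ltxx.
Qed.

Lemma sgnq_pos (L x : rat) : 0 < L * x -> sgnq x = sgnq L.
Proof.
rewrite /sgnq; case: (ltrgtP L 0) => HL.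
- rewrite nmulr_rgt0 // => Hx; by rewrite Hx.
- rewrite pmulr_rgt0 // => Hx; by rewrite ltNge ltW // gt_eqF // ltNge ltW // gt_eqF.
- by rewrite HL mul0r ltxx.
Qed.

Lemma div_pos (a b x y : rat) : 0 < a * x -> 0 < b * y -> 0 < (a * b) * (x / y).
Proof.
have E : a * b * (x / y) = (a * x) * (b * y^-1).
  by rewrite mulrACA.
rewrite E => H1 H2; apply: mulr_gt0 => //.
case: (ltrgtP b 0) => Hb; last by rewrite Hb mul0r ltxx in H2.
- move: H2; rewrite !nmulr_rgt0 //; by rewrite invr_lt0.
- move: H2; rewrite !pmulr_rgt0 //; by rewrite invr_gt0.
Qed.

Definition cterm (s : rat) : term :=
  if s < 0 then TOpp TOne else if s == 0 then TZero else TOne.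

Lemma cterm_eval s q : eval (cterm s) q = sgnq s.
Proof. by rewrite /cterm /sgnq; case: ifP => //; case: ifP. Qed.

Lemma cterm_sf s : sign_free (cterm s).
Proof. by rewrite /cterm; case: ifP => //; case: ifP. Qed.

Definition rep (h : term) := exists (r : rat) (g : term) (P Q : {poly rat}),
  sign_free g /\ Q != 0 /\ forall q, r < q ->
    Q.[q] != 0 /\ eval h q = eval g q /\ eval h q = P.[q] / Q.[q].

Lemma rep_all h : rep h.
Proof.
elim: h.
- exists 0, TVar, 'X, 1; split=> //; split; first exact: oner_neq0.
  by move=> q _; rewrite hornerX hornerC divr1 oner_neq0.
- exists 0, TZero, 0, 1; split=> //; split; first exact: oner_neq0.
  by move=> q _; rewrite !hornerC mul0r oner_neq0.
- exists 0, TOne, 1, 1; split=> //; split; first exact: oner_neq0.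
  by move=> q _; rewrite !hornerC divr1 oner_neq0.
- move=> a [r1 [g1 [P1 [Q1 [s1 [n1 H1]]]]]] b [r2 [g2 [P2 [Q2 [s2 [n2 H2]]]]]].
  exists (Num.max r1 r2), (TAdd g1 g2), (P1 * Q2 + P2 * Q1), (Q1 * Q2).
  split; first by rewrite /= s1 s2.
  split; first by rewrite mulf_neq0.
  move=> q /mx [/H1 [z1 [e1 f1]] /H2 [z2 [e2 f2]]] /=.
  rewrite hornerM mulf_neq0 // e1 e2; split=> //; split=> //.
  by rewrite -e1 -e2 f1 f2 addf_div // !(hornerD, hornerM).
- move=> a [r1 [g1 [P1 [Q1 [s1 [n1 H1]]]]]] b [r2 [g2 [P2 [Q2 [s2 [n2 H2]]]]]].
  exists (Num.max r1 r2), (TMul g1 g2), (P1 * P2), (Q1 * Q2).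
  split; first by rewrite /= s1 s2.
  split; first by rewrite mulf_neq0.
  move=> q /mx [/H1 [z1 [e1 f1]] /H2 [z2 [e2 f2]]] /=.
  rewrite hornerM mulf_neq0 // e1 e2; split=> //; split=> //.
  by rewrite -e1 -e2 f1 f2 mulf_div !hornerM.
- move=> a [r1 [g1 [P1 [Q1 [s1 [n1 H1]]]]]].
  exists r1, (TOpp g1), (- P1), Q1; split=> //; split=> //.
  move=> q /H1 [z1 [e1 f1]] /=; rewrite e1; split=> //; split=> //.
  by rewrite -e1 f1 hornerN mulNr.
- move=> a [r1 [g1 [P1 [Q1 [s1 [n1 H1]]]]]].
  have [P0|Pn0] := eqVneq P1 0.
    exists r1, (TInv g1), 0, 1; split=> //; split; first exact: oner_neq0.
    move=> q /H1 [z1 [e1 f1]] /=; rewrite e1 hornerC oner_neq0; split=> //.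
    by split=> //; rewrite -e1 f1 P0 !hornerC !mul0r invr0.
  have [r2 H2] := poly_nz P1 Pn0.
  exists (Num.max r1 r2), (TInv g1), Q1, P1; split=> //; split=> //.
  move=> q /mx [/H1 [z1 [e1 f1]] /H2 z2] /=; rewrite e1; split=> //; split=> //.
  by rewrite -e1 f1 invf_div.
- move=> a [r1 [g1 [P1 [Q1 [s1 [n1 H1]]]]]].
  have [P0|Pn0] := eqVneq P1 0.
    exists r1, TZero, 0, 1; split=> //; split; first exact: oner_neq0.
    move=> q /H1 [z1 [e1 f1]] /=; rewrite hornerC oner_neq0; split=> //.
    by rewrite f1 P0 !hornerC !mul0r /sgnq ltxx eqxx.
  have [r2 H2] := poly_sg P1 Pn0.
  have [r3 H3] := poly_sg Q1 n1.
  set L := lead_coef P1 * lead_coef Q1.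
  exists (Num.max r1 (Num.max r2 r3)), (cterm L), (sgnq L)%:P, 1.
  split; first exact: cterm_sf.
  split; first exact: oner_neq0.
  move=> q /mx [/H1 [z1 [e1 f1]] /mx [/H2 z2 /H3 z3]] /=.
  rewrite cterm_eval !hornerC divr1 oner_neq0.
  suff -> : sgnq (eval a q) = sgnq L by [].
  by apply: sgnq_pos; rewrite f1 /L; apply: div_pos.
Qed.

Theorem theorem4 (h : term) :
  exists (r : rat) (g : term),
    sign_free g /\ (forall q : rat, r < q -> eval h q = eval g q).
Proof.
have [r [g [P [Q [s [_ H]]]]]] := rep_all h.
by exists r, g; split=> // q /H [_ []].
Qed.
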